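(* $\Sigma^*\setminus L_{\mathrm{UNIQ}}\subseteq\bigcup_{x\in\Sigma}\bigcup_{a,b\in\Sigma\setminus\{x\}}K_{x,a,b}$; that is, every string $w\in\Sigma^*$ that is not uniquely decodable from its bigram counts belongs to $L_{\mathrm{OBST}}$.
   Context: Let $\Sigma$ be a finite alphabet and $\$\notin\Sigma$ a delimiter symbol; $\Sigma_\$=\Sigma\cup\{\$\}$. The bigram map $\Phi$ sends a string $z\in\$\Sigma^*\$$ to the vector $\Phi(z)\in\mathbb{N}^{\Sigma_\$^2}$ whose $(i,j)$ entry is the number of positions at which the two-letter string $ij$ occurs as a contiguous factor of $z$ (counting overlaps). $L_{\mathrm{UNIQ}}$ is the set of $w\in\Sigma^*$ such that the only $z\in\$\Sigma^*\$$ with $\Phi(z)=\Phi(\$w\$)$ is $z=\$w\$$. For $x\in\Sigma$ write $\Sigma_{\neg x}=\Sigma\setminus\{x\}$. For $x\in\Sigma$ and $a,b\in\Sigma_{\neg x}$ (with $a=b$ allowed) define $I_{x,a,b}=\Sigma^*\,a\,x\,\Sigma_{\neg a}^*\,b\,\Sigma^*$, $J_{x,a,b}=\Sigma^*\,a\,\Sigma_{\neg x}^*\,b\,\Sigma^*$ (regular-expression notation), $K_{x,a,b}=I_{x,a,b}\cap J_{x,a,b}$, and $L_{\mathrm{OBST}}=\bigcup_{x\in\Sigma}\bigcup_{a,b\in\Sigma_{\neg x}}K_{x,a,b}$. *)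

(* Defs.v *)
From mathcomp Require Import all_boot.
Set Implicit Arguments. Unset Strict Implicit. Unset Printing Implicit Defensive.

Section Bigrams.
Variable T : finType.

(* Strings over Sigma_$ : [None] is the delimiter $, [Some c] is the letter c *)
Definition delim (w : seq T) : seq (option T) := None :: rcons (map Some w) None.

Definition bigram (z : seq (option T)) (i j : option T) : nat :=
  count (pred1 (i, j)) (zip z (behead z)).

Definition uniq_decodable (w : seq T) : Prop :=
  forall u : seq T,
    (forall i j, bigram (delim u) i j = bigram (delim w) i j) -> delim u = delim w.

Definition in_I (x a b : T) (w : seq T) : Prop :=
  exists p m s : seq T, a \notin m /\ w = p ++ [:: a; x] ++ m ++ b :: s.

Definition in_J (x a b : T) (w : seq T) : Prop :=
  exists p m s : seq T, x \notin m /\ w = p ++ a :: m ++ b :: s.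

Definition in_K (x a b : T) (w : seq T) : Prop := in_I x a b w /\ in_J x a b w.

Definition in_OBST (w : seq T) : Prop :=
  exists x a b : T, a != x /\ b != x /\ in_K x a b w.

End Bigrams.

(* Main.v *)
Require Import Defs.
From mathcomp Require Import all_boot.
From Stdlib Require Import Classical.
Set Implicit Arguments. Unset Strict Implicit. Unset Printing Implicit Defensive.

Section Gen.
Variable U : eqType.

Definition prs (s : seq U) : seq (U * U) := zip s (behead s).

Lemma prs_cons z s : prs (z :: s) = if s is y :: _ then (z, y) :: prs s else [::].
Proof. by case: s. Qed.

Lemma prs_cat l x y l' :
  prs (l ++ x :: y :: l') = prs (rcons l x) ++ (x, y) :: prs (y :: l').
Proof.
elim: l => [|z l IH] //=.
rewrite [prs (z :: _)]prs_cons [prs (z :: rcons _ _)]prs_cons IH.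
by case: l {IH}.
Qed.

Lemma prs_mem p q s : (p, q) \in prs s -> p \in s /\ q \in s.
Proof.
elim: s => // z s IH; rewrite prs_cons; case: s IH => // y s IH.
rewrite in_cons => /orP [/eqP [-> ->]|/IH [h1 h2]].
  by rewrite !inE !eqxx ?orbT.
by split; rewrite in_cons; apply/orP; right.
Qed.

Lemma pair_in l x y l' : (x, y) \in prs (l ++ x :: y :: l').
Proof. by rewrite prs_cat mem_cat in_cons eqxx orbT. Qed.

Lemma prs_rcons_fst p q l x : (p, q) \in prs (rcons l x) -> p \in l.
Proof.
elim: l => [|z l IH] //=; rewrite prs_cons; case: l IH => [|y l] IH /=.
  by rewrite in_cons => /orP [/eqP [-> _]|//]; rewrite eqxx.
rewrite in_cons => /orP [/eqP [-> _]|/IH H]; first by rewrite eqxx.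
by apply/orP; right.
Qed.

Lemma first_pair x y s : (x, y) \in prs s ->
  exists A B, s = A ++ x :: y :: B /\ (x, y) \notin prs (rcons A x).
Proof.
elim: s => // z s IH; rewrite prs_cons; case: s IH => // w s IH.
case: (eqVneq (x, y) (z, w)) => [[-> ->] _|ne].
  by exists [::], s.
rewrite in_cons (negbTE ne) /= => /IH [A [B [E nin]]].
exists (z :: A), B; split; first by rewrite E.
rewrite rcons_cons prs_cons.
case: A E nin => [|a A] /= [Ew _] nin; move: ne; rewrite Ew => ne;
  by rewrite in_cons negb_or ne.
Qed.

Lemma first_in (P : pred U) s : has P s ->
  exists s1 v s2, [/\ s = s1 ++ v :: s2, P v & ~~ has P s1].
Proof.
elim: s => //= z s IH; case Pz: (P z) => /=.
  by move=> _; exists [::], z, s.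
move=> /IH [s1 [v [s2 [E Pv Hn]]]]; exists (z :: s1), v, s2.
by rewrite E /= Pz.
Qed.

Lemma last_occ (v : U) s : v \in s -> exists s1 s2, s = s1 ++ v :: s2 /\ v \notin s2.
Proof.
elim: s => // z s IH; rewrite in_cons; case Hs: (v \in s).
  by move=> _; have [s1 [s2 [E N]]] := IH Hs; exists (z :: s1), s2; rewrite E.
rewrite orbF => /eqP <-; exists [::], s; by rewrite Hs.
Qed.

Lemma drop_last (S0 : seq U) e l b s' : S0 ++ [:: e] = l ++ b :: s' -> b != e ->
  exists s'', S0 = l ++ b :: s''.
Proof.
case/lastP: s' => [|s'' z].
  by rewrite !cats1 => /rcons_inj [_ ->]; rewrite eqxx.
rewrite -rcons_cons -rcons_cat cats1 => /rcons_inj [-> _] _; by exists s''.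
Qed.

Definition gI (x a b : U) (s : seq U) :=
  exists p m s', a \notin m /\ s = p ++ [:: a; x] ++ m ++ b :: s'.
Definition gJ (x a b : U) (s : seq U) :=
  exists p m s', x \notin m /\ s = p ++ a :: m ++ b :: s'.

Lemma gI_tr (S0 : seq U) e x a b p m s' : a \notin m ->
  S0 ++ [:: e] = p ++ [:: a; x] ++ m ++ b :: s' -> b != e -> gI x a b S0.
Proof.
move=> Ha E be; rewrite !catA in E.
have [s'' E'] := drop_last E be.
by exists p, m, s''; rewrite E' -!catA.
Qed.

Lemma gJ_tr (S0 : seq U) e x a b p m s' : x \notin m ->
  S0 ++ [:: e] = p ++ a :: m ++ b :: s' -> b != e -> gJ x a b S0.
Proof.
move=> Ha E be; rewrite -cat_cons catA in E.
have [s'' E'] := drop_last E be.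
by exists p, m, s''; rewrite E' -catA.
Qed.

Lemma prefix_not (S0 : seq U) e P y Y : S0 ++ [:: e] = P ++ y :: Y -> e \notin S0 -> e \notin P.
Proof.
rewrite (lastI y Y) -rcons_cat cats1 => /rcons_inj [-> _].
by rewrite mem_cat negb_or => /andP [].
Qed.

Lemma notin_hasN (P : seq U) B z : ~~ has (mem P) B -> z \in P -> z \notin B.
Proof. move=> /hasPn H zP; apply/negP => /H; by rewrite /= zP. Qed.


Lemma key (t c d e : U) R R' (S0 : seq U) :
  c != d -> t :: c :: R = S0 ++ [:: e] -> e \notin S0 ->
  perm_eq (prs (t :: c :: R)) (prs (t :: d :: R')) ->
  exists x a b, [/\ a != x, b != x, gI x a b S0 & gJ x a b S0].
Proof.
move=> cd ES eS0 pe.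
have tdS : (t, d) \in prs (t :: c :: R).
  by rewrite (perm_mem pe) prs_cons mem_head.
have [L [B [EL nL]]] := first_pair tdS.
have [l0 [L' EL']] : exists l0 L', L = l0 :: L'.
  case: L EL {nL} => [/= E|l0 L' _]; last by exists l0, L'.
  by case: E => cd'; rewrite cd' eqxx in cd.
move: EL nL; rewrite EL' /= => -[<- EcR] nL.
set P := rcons (t :: L') t.
have ES2 : t :: c :: R = P ++ d :: B by rewrite /P cat_rcons EcR.
have tP : t \in P by rewrite /P mem_rcons mem_head.
have cP : c \in P.
  by rewrite /P; case: L' EcR {nL P ES2 tP EL'} => [|a L'] /= [-> _];
     rewrite !inE eqxx ?orbT.
have pe' : perm_eq (prs (d :: R')) (prs P ++ prs (d :: B)).
  move: pe; rewrite ES2 /P cat_rcons prs_cat.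
  have h := perm_catCA (prs (rcons (t :: L') t)) [:: (t, d)] (prs (d :: B)).
  rewrite /= in h; rewrite h [prs (t :: d :: R')]prs_cons perm_cons.
  by rewrite perm_sym.
have eP : e \notin P by apply: (prefix_not _ eS0); rewrite -ES ES2.
have [v0 [v0P v0B]] : exists v, v \in P /\ v \in d :: B.
  have hasW : has (mem P) (d :: R').
    have : (t, c) \in prs (t :: d :: R').
      by rewrite -(perm_mem pe) prs_cons mem_head.
    rewrite prs_cons in_cons => /orP [/eqP [ce]|/prs_mem [tW _]].
      by rewrite ce eqxx in cd.
    by apply/hasP; exists t.
  have [W1 [q [W2 [EW qP nW1]]]] := first_in hasW.
  exists q; split => //.
  case/lastP: W1 EW nW1 => [|W1' p] EW nW1.
    by move: EW => /= [-> _]; rewrite mem_head.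
  have : (p, q) \in prs (d :: R') by rewrite EW cat_rcons pair_in.
  rewrite (perm_mem pe') mem_cat => /orP [/prs_mem [pP _]|/prs_mem [_ //]].
  by move: nW1; rewrite has_rcons /= pP.
have hasB : has (mem P) (d :: B) by apply/hasP; exists v0.
have [B1 [v [B2 [EB vP nB1]]]] := first_in hasB.
have ES3 : S0 ++ [:: e] = (t :: L') ++ t :: d :: B by rewrite -ES EcR.
have bne : forall b, b \in P -> b != e.
  by move=> b bP; apply: contraNneq eP => <-.
have [vt|vt] := eqVneq v t.
- subst v.
  have [ct|ct] := eqVneq c t.
  + case: B1 EB nB1 => [|d' B1'] EB nB1.
      by move: EB => /= [dt _]; rewrite ct dt eqxx in cd.
    move: EB => /= [Ed EB]; subst d'.
    have nB1' : ~~ has (mem P) B1' by move: nB1; rewrite /= negb_or => /andP [].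
    exists d, t, t; split; [by rewrite -ct | by rewrite -ct | |].
      apply: (@gI_tr S0 e d t t (t :: L') B1' B2);
        [exact: notin_hasN nB1' tP | by rewrite ES3 EB | exact: bne t tP].
    apply: (@gJ_tr S0 e d t t [::] [::] R);
      [by [] | by rewrite -ES ct | exact: bne t tP].
  + have hasR : has (pred1 t) R.
      move: EcR; case E: L' => [|a L''] /=.
        by move=> [ctt]; rewrite ctt eqxx in ct.
      by move=> [_ ->]; rewrite has_cat /= eqxx orbT.
    have [R1 [t' [R2 [ER /eqP tt' nR1]]]] := first_in hasR.
    subst t'.
    exists c, t, t; split; [by rewrite eq_sym | by rewrite eq_sym | |].
      apply: (@gI_tr S0 e c t t [::] R1 R2);
        [by rewrite -has_pred1 | by rewrite -ES ER | exact: bne t tP].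
    apply: (@gJ_tr S0 e c t t (t :: L') B1 B2);
      [exact: notin_hasN nB1 cP | by rewrite ES3 EB | exact: bne t tP].
- have vL : v \in t :: L'.
    have vP' : v \in rcons (t :: L') t := vP.
    by move: vP'; rewrite mem_rcons in_cons (negbTE vt).
  have [Q1 [v' [Q2 [EL1 /eqP vv nQ1]]]] :=
    @first_in (pred1 v) (t :: L') ltac:(by rewrite has_pred1).
  subst v'.
  have tQ1 : t \in Q1.
    case: Q1 EL1 nQ1 => [|q Q1'] /= [tq _] _; last by rewrite tq mem_head.
    by rewrite tq eqxx in vt.
  have [Q11 [Q12 [EQ1 tQ12]]] := last_occ tQ1.
  have vQ12 : v \notin Q12.
    by move: nQ1; rewrite has_pred1 EQ1 mem_cat in_cons !negb_or => /and3P [].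
  have EL2 : t :: L' = Q11 ++ t :: Q12 ++ v :: Q2 by rewrite EL1 EQ1 -catA.
  case: Q12 EQ1 tQ12 vQ12 EL2 => [|y Q12'] EQ1 tQ12 vQ12 EL2.
  + case: B1 EB nB1 => [|d' B1'] EB nB1.
      move: EB => /= [dv _]; exfalso; apply: (negP nL).
      by rewrite -rcons_cons EL2 /= rcons_cat /= dv pair_in.
    move: EB => /= [Ed EB]; subst d'.
    have nB1' : ~~ has (mem P) B1' by move: nB1; rewrite /= negb_or => /andP [].
    have dP : d \notin P by move: nB1; rewrite /= negb_or => /andP [].
    exists d, t, v; split.
    * by apply: contraNneq dP => <-.
    * by apply: contraNneq dP => <-.
    * apply: (@gI_tr S0 e d t v (t :: L') B1' B2);
        [exact: notin_hasN nB1' tP | by rewrite ES3 EB | exact: bne v vP].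
    * apply: (@gJ_tr S0 e d t v Q11 [::] (Q2 ++ t :: d :: B));
        [by [] | by rewrite ES3 EL2 -catA | exact: bne v vP].
  + have yP : y \in P.
      rewrite /P mem_rcons in_cons; apply/orP; right.
      by rewrite EL2 mem_cat; apply/orP; right; rewrite !inE eqxx orbT.
    exists y, t, v; split.
    * by move: tQ12; rewrite in_cons negb_or => /andP [].
    * by move: vQ12; rewrite in_cons negb_or => /andP [].
    * apply: (@gI_tr S0 e y t v Q11 Q12' (Q2 ++ t :: d :: B)).
      - by move: tQ12; rewrite in_cons negb_or => /andP [].
      - by rewrite ES3 EL2 /= -catA /= -catA.
      - exact: bne v vP.
    * apply: (@gJ_tr S0 e y t v (t :: L') B1 B2);
        [exact: notin_hasN nB1 yP | by rewrite ES3 EB | exact: bne v vP].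
Qed.

Lemma div (h : U) s s' : perm_eq (prs (h :: s)) (prs (h :: s')) -> h :: s != h :: s' ->
  exists p t c d R R', [/\ h :: s = p ++ t :: c :: R, h :: s' = p ++ t :: d :: R',
    c != d & perm_eq (prs (t :: c :: R)) (prs (t :: d :: R'))].
Proof.
elim: s h s' => [|c R IH] h [|d R'] pe ne;
  try by [rewrite eqxx in ne | move/perm_size: pe; rewrite !prs_cons].
- case: (eqVneq c d) => [E|cd]; last by exists [::], h, c, d, R, R'.
  subst d.
  move: pe; rewrite [prs (h :: c :: R)]prs_cons [prs (h :: c :: R')]prs_cons perm_cons => pe.
  rewrite eqseq_cons eqxx /= in ne.
  have [p [t [c' [d' [R1 [R1' [E1 E2 cd' pe']]]]]]] := IH c R' pe ne.
  by exists (h :: p), t, c', d', R1, R1'; rewrite E1 E2.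
Qed.

End Gen.

Section Spec.
Variable T : finType.

Lemma map_cat_inv (w : seq T) l1 l2 : map Some w = l1 ++ l2 ->
  exists w1 w2, [/\ w = w1 ++ w2, l1 = map Some w1 & l2 = map Some w2].
Proof.
elim: l1 w => [|y l1 IH] w /=; first by exists [::], w.
case: w => // a w [<- /IH [w1 [w2 [-> -> ->]]]]; by exists (a :: w1), w2.
Qed.

Lemma I_map (w : seq T) x a b : gI x a b (map Some w) ->
  exists x0 a0 b0, [/\ x = Some x0, a = Some a0, b = Some b0 & in_I x0 a0 b0 w].
Proof.
move=> [p [m [s [Hm E]]]].
have [w1 [w2 [-> _ E2]]] := map_cat_inv E.
case: w2 E2 => [|a0 [|x0 w3]] //= [Ea Ex E3].
have [m0 [r [E4 Em Er]]] := map_cat_inv (esym E3).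
case: r Er E4 => [|b0 s0] //= [Eb Es] E4.
exists x0, a0, b0; split => //.
exists w1, m0, s0; split; last by rewrite E4.
by move: Hm; rewrite Em Ea mem_map //; exact: Some_inj.
Qed.

Lemma J_map (w : seq T) x a b : gJ (Some x) (Some a) (Some b) (map Some w) ->
  in_J x a b w.
Proof.
move=> [p [m [s [Hm E]]]].
have [w1 [w2 [-> _ E2]]] := map_cat_inv E.
case: w2 E2 => [|a0 w3] //= [Ea E3].
have [m0 [r [E4 Em Er]]] := map_cat_inv (esym E3).
case: r Er E4 => [|b0 s0] //= [Eb Es] E4.
exists w1, m0, s0; split.
  by move: Hm; rewrite Em mem_map //; exact: Some_inj.
by rewrite E4 Ea Eb.
Qed.

Lemma suffix_map (w : seq T) p' S : S != [::] ->
  rcons (map Some w) None = p' ++ S ->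
  exists w1 w2, w = w1 ++ w2 /\ S = rcons (map Some w2) None.
Proof.
elim: p' w => [|x p' IH] w SN E; first by exists [::], w.
case: w E => [|a w] /= E.
  case: E => _ E; have := congr1 size E; rewrite size_cat.
  by case: S SN {E IH} => // y S _ /=; rewrite addnS.
case: E => _ /(IH w SN) [w1 [w2 [-> ->]]]; by exists (a :: w1), w2.
Qed.

End Spec.

Theorem lemma4 (T : finType) (w : seq T) :
  ~ uniq_decodable w -> in_OBST w.
Proof.
move=> nu.
have [u [Hb Hne]] : exists u, (forall i j, bigram (delim u) i j = bigram (delim w) i j)
    /\ delim u <> delim w.
  apply: NNPP => H; apply: nu => u Hb; apply: NNPP => Hne; apply: H; by exists u.
have pe : perm_eq (prs (delim w)) (prs (delim u)).
  apply/allP => -[i j] _; apply/eqP; rewrite /prs; by have := Hb i j; rewrite /bigram => ->.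
have ne : delim w != delim u by apply/eqP => E; apply: Hne.
move: pe ne; rewrite /delim => pe ne.
have [p [t [c [d [R [R' [E1 E2 cd pe']]]]]]] := div pe ne.
case: p E1 E2 => [|h p'] /= E1 E2.
  case: E1 => tN EcR; subst t.
  have : (None, d) \in prs (None :: c :: R).
    by rewrite (perm_mem pe') prs_cons mem_head.
  rewrite prs_cons in_cons => /orP [/eqP [dc]|].
    by rewrite dc eqxx in cd.
  rewrite -EcR => /prs_rcons_fst /mapP [y _] //.
case: E1 => _ E1.
have [w1 [w2 [Ew ES]]] := suffix_map (S := t :: c :: R) isT E1.
rewrite -cats1 in ES.
have nN : None \notin map Some w2 by apply/mapP => -[y _].
have [x [a [b [ax bx HI HJ]]]] := key cd ES nN pe'.
have [x0 [a0 [b0 [Ex Ea Eb HI']]]] := I_map HI.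
subst x a b.
have HJ' := J_map HJ.
exists x0, a0, b0; split; [|split; [|split]].
- by move: ax; rewrite (inj_eq Some_inj).
- by move: bx; rewrite (inj_eq Some_inj).
- move: HI' => [q [m [s [Hm E]]]]; exists (w1 ++ q), m, s; split => //.
  by rewrite Ew E catA.
- move: HJ' => [q [m [s [Hm E]]]]; exists (w1 ++ q), m, s; split => //.
  by rewrite Ew E catA.
Qed.
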